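(* Let $G$ be a countable group and $\mu$ a symmetric probability measure on $G$ supported on a subgroup $H$ equipped with a finite symmetric generating set and its word length $|\cdot|$. Assume there are a constant $d>0$ and a positive increasing function $\phi$ on $(0,\infty)$, regularly varying of positive index at infinity, such that $\#\{h\in H:|h|\le r\}\asymp r^d$ ($r\ge1$) and $\mu(h)\asymp[\phi(1+|h|)(1+|h|)^d]^{-1}$ for $h\in H$. Let $\Phi(t)=t^2\big/\int_0^t\frac{s\,ds}{\phi(s)}$ for $t\ge1$. Then there is a constant $C$ such that for all $f\in L^2(G)$, all $R\ge1$ and all $h\in H$ with $|h|\le R$, $$\sum_{x\in G}|f(xh)-f(x)|^2\le C\Phi(R)\,\mathcal E_{G,\mu}(f,f).$$
   Context: For positive functions, $f_1\asymp f_2$ means $c_1f_1\le f_2\le c_2f_1$ for constants $0<c_1\le c_2$. A positive function $f$ is regularly varying of index $\gamma$ at infinity if $f(\lambda t)/f(t)\to\lambda^\gamma$ as $t\to\infty$ for every $\lambda>0$. $\mathcal E_{G,\mu}(f,f)=\frac12\sum_{x,y\in G}|f(xy)-f(x)|^2\mu(y)$ for $f\in L^2(G)$ (counting measure). *)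

(* Defs.v *)
From Stdlib Require Import Reals Lra List.
Import ListNotations.
Open Scope R_scope.

Definition is_group {G : Type} (mul : G -> G -> G) (inv : G -> G) (e : G) : Prop :=
  (forall x y z, mul (mul x y) z = mul x (mul y z)) /\
  (forall x, mul e x = x) /\ (forall x, mul x e = x) /\
  (forall x, mul (inv x) x = e) /\ (forall x, mul x (inv x) = e).

Definition countable (G : Type) : Prop :=
  exists en : nat -> G, forall x, exists n, en n = x.

Definition lsum {T : Type} (F : T -> R) (l : list T) : R :=
  fold_right (fun x acc => F x + acc) 0 l.

Definition fin_sums {T : Type} (F : T -> R) : R -> Prop :=
  fun s => exists l : list T, NoDup l /\ s = lsum F l.

(* sum_{x in T} F x = s  (F nonnegative): s is the sup of the finite partial sums *)
Definition sums_to {T : Type} (F : T -> R) (s : R) : Prop := is_lub (fin_sums F) s.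

Definition in_L2 {G : Type} (f : G -> R) : Prop :=
  exists B, forall l : list G, NoDup l -> lsum (fun x => (f x)^2) l <= B.

Definition word_le {G : Type} (mul : G -> G -> G) (e : G) (S : list G) (h : G) (n : nat)
  : Prop :=
  exists w : list G, (length w <= n)%nat /\ Forall (fun s => In s S) w /\
                     fold_right mul e w = h.

Definition word_length {G : Type} (mul : G -> G -> G) (e : G) (S : list G) (h : G) (n : nat)
  : Prop :=
  word_le mul e S h n /\ forall m, word_le mul e S h m -> (n <= m)%nat.

Definition regularly_varying (phi : R -> R) (gamma : R) : Prop :=
  forall lam, 0 < lam ->
    forall eps, 0 < eps -> exists T, forall t, T < t ->
      Rabs (phi (lam * t) / phi t - Rpower lam gamma) < eps.

Definition improper_int0 (f : R -> R) (t I : R) : Prop :=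
  forall eps, 0 < eps -> exists delta, 0 < delta /\
    forall a, 0 < a < delta ->
      exists pr : Riemann_integrable f a t, Rabs (RiemannInt pr - I) < eps.

(* Main.v *)
Require Import Defs.
From Stdlib Require Import Reals List Lra Lia Classical ClassicalEpsilon ZArith.
Import ListNotations.
Open Scope R_scope.

Lemma lsum_nil {T} (F : T -> R) : lsum F [] = 0.
Proof. reflexivity. Qed.
Lemma lsum_cons {T} (F : T -> R) a l : lsum F (a :: l) = F a + lsum F l.
Proof. reflexivity. Qed.
Lemma lsum_app {T} (F : T -> R) l1 l2 : lsum F (l1 ++ l2) = lsum F l1 + lsum F l2.
Proof. induction l1; simpl; [lra|]. unfold lsum in *; simpl. rewrite IHl1. lra. Qed.
Lemma lsum_map {A B} (F : B -> R) (g : A -> B) l : lsum F (map g l) = lsum (fun x => F (g x)) l.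
Proof. induction l; simpl; auto. unfold lsum in *; simpl. rewrite IHl. auto. Qed.
Lemma lsum_plus {T} (F G : T -> R) l : lsum (fun x => F x + G x) l = lsum F l + lsum G l.
Proof. induction l; unfold lsum in *; simpl; [lra|]. rewrite IHl. lra. Qed.
Lemma lsum_scal {T} (c : R) (F : T -> R) l : lsum (fun x => c * F x) l = c * lsum F l.
Proof. induction l; unfold lsum in *; simpl; [lra|]. rewrite IHl. lra. Qed.
Lemma lsum_ext {T} (F G : T -> R) l : (forall x, In x l -> F x = G x) -> lsum F l = lsum G l.
Proof. induction l; intros H; unfold lsum in *; simpl; auto.
  rewrite H by (left; auto). rewrite IHl; auto. intros; apply H; right; auto. Qed.
Lemma lsum_le {T} (F G : T -> R) l : (forall x, In x l -> F x <= G x) -> lsum F l <= lsum G l.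
Proof. induction l; intros H; unfold lsum in *; simpl; [lra|].
  assert (F a <= G a) by (apply H; left; auto).
  assert (fold_right (fun x acc => F x + acc) 0 l <= fold_right (fun x acc => G x + acc) 0 l)
   by (apply IHl; intros; apply H; right; auto). lra. Qed.
Lemma lsum_nonneg {T} (F : T -> R) l : (forall x, In x l -> 0 <= F x) -> 0 <= lsum F l.
Proof. intros H. replace 0 with (lsum (fun _ => 0) l).
  apply lsum_le; auto. induction l; unfold lsum in *; simpl; auto. rewrite IHl; [lra|].
  intros; apply H; right; auto. Qed.
Lemma lsum_const {T} (c : R) (l : list T) : lsum (fun _ => c) l = INR (length l) * c.
Proof. induction l; unfold lsum in *; simpl length; [simpl; lra|].
  rewrite S_INR. simpl. rewrite IHl. lra. Qed.
Lemma lsum_swap {A B} (F : A -> B -> R) la lb :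
  lsum (fun a => lsum (fun b => F a b) lb) la = lsum (fun b => lsum (fun a => F a b) la) lb.
Proof. induction la.
  - rewrite lsum_nil. symmetry. replace (lsum (fun b : B => lsum (fun a : A => F a b) []) lb)
     with (lsum (fun _ : B => 0) lb) by (apply lsum_ext; auto).
    rewrite lsum_const. lra.
  - rewrite lsum_cons, IHla. rewrite <- lsum_plus. apply lsum_ext. intros; rewrite lsum_cons; auto. Qed.
Lemma lsum_repeat {T} (F : T -> R) (a : T) n : lsum F (repeat a n) = INR n * F a.
Proof. induction n; simpl repeat; [simpl; lra|]. rewrite lsum_cons, IHn, S_INR. lra. Qed.
Lemma lsum_flat_map {A B} (F : B -> R) (g : A -> list B) l :
  lsum F (flat_map g l) = lsum (fun a => lsum F (g a)) l.
Proof. induction l; [reflexivity|]. cbn [flat_map]. rewrite lsum_app, lsum_cons, IHl. auto. Qed.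

Lemma lsum_incl {T} (q : T -> R) (A B : list T) : NoDup A -> (forall x, In x A -> In x B) ->
  (forall x, 0 <= q x) -> lsum q A <= lsum q B.
Proof. intros HA; revert B. induction HA as [|a A Ha HA IH]; intros B Hin Hq.
  - rewrite lsum_nil. apply lsum_nonneg; auto.
  - destruct (in_split a B (Hin a (or_introl eq_refl))) as [B1 [B2 ->]].
    rewrite lsum_cons. rewrite lsum_app, lsum_cons.
    assert (lsum q A <= lsum q (B1 ++ B2)).
    { apply IH; auto. intros x Hx. assert (In x (B1 ++ a :: B2)) by (apply Hin; right; auto).
      apply in_app_or in H. apply in_or_app. destruct H as [H|[H|H]]; auto.
      subst; contradiction. }
    rewrite lsum_app in H. lra. Qed.

Lemma dedup_ex {T} (l : list T) (Q : T -> Prop) : exists l', NoDup l' /\ forall x, In x l' <-> In x l /\ Q x.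
Proof. induction l as [|a l [l' [Hn Hl]]].
  - exists []. split; [constructor|]. simpl; tauto.
  - destruct (classic (Q a /\ ~ In a l')) as [[Hq Hni]|Hno].
    + exists (a :: l'). split; [constructor; auto|]. intros x; simpl. rewrite Hl.
      split; [intros [<-|H]; tauto|]. intros [[<-|H] HQ]; auto.
    + exists l'. split; auto. intros x; simpl; rewrite Hl. split; [tauto|].
      intros [[<-|H] HQ]; auto. destruct (classic (In a l')) as [H1|H1].
      apply Hl; auto. exfalso; apply Hno; auto.
Qed.

Lemma CS_step (D S w W T : R) : 0 < w -> 0 <= W -> 0 <= T -> S^2 <= W * T ->
  (D + S)^2 <= (w + W) * (D^2 / w + T).
Proof. intros Hw HW HT HS.
  destruct (Req_dec W 0) as [H0|H0].
  - subst W. assert (S = 0) by nra. subst. field_simplify; [|lra].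
    assert (0 <= w * T) by nra. unfold Rdiv. nra.
  - assert (0 < W) by lra.
    assert (key: 2 * D * S <= W * (D^2 / w) + w * T).
    { assert (W * (W * (D^2/w) + w*T - 2*D*S) >= 0).
      { replace (W * (W * (D^2/w) + w*T - 2*D*S)) with
          ((W*D - w*S)^2 / w + w * (W*T - S^2)) by (field; lra).
        assert (0 <= (W*D - w*S)^2 / w) by (apply Rmult_le_pos; [apply pow2_ge_0| left; apply Rinv_0_lt_compat; lra]).
        nra. }
      nra. }
    replace ((w + W) * (D^2 / w + T)) with (D^2 + W * (D^2/w) + w*T + W*T) by (field; lra).
    nra.
Qed.

Lemma Rpower_pos x y : 0 < Rpower x y.
Proof. unfold Rpower. apply exp_pos. Qed.
Lemma Rpower_mul x y d : 0 < x -> 0 < y -> Rpower (x * y) d = Rpower x d * Rpower y d.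
Proof. intros. symmetry. apply Rpower_mult_distr; auto. Qed.

Section Grp.
Variable G : Type.
Variable mul : G -> G -> G.
Variable inv : G -> G.
Variable e : G.
Hypothesis Hgrp : is_group mul inv e.
Variable Sg : list G.
Hypothesis HS_sym : forall s, In s Sg -> In (inv s) Sg.

Lemma g_assoc x y z : mul (mul x y) z = mul x (mul y z).
Proof. apply Hgrp. Qed.
Lemma g_el x : mul e x = x. Proof. apply Hgrp. Qed.
Lemma g_er x : mul x e = x. Proof. apply Hgrp. Qed.
Lemma g_il x : mul (inv x) x = e. Proof. apply Hgrp. Qed.
Lemma g_ir x : mul x (inv x) = e. Proof. apply Hgrp. Qed.

Lemma g_inv_uniq x y : mul x y = e -> y = inv x.
Proof. intros H. rewrite <- (g_el y), <- (g_il x), g_assoc, H, g_er. auto. Qed.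
Lemma g_inv_mul a b : inv (mul a b) = mul (inv b) (inv a).
Proof. symmetry. apply g_inv_uniq. rewrite g_assoc, <- (g_assoc b), g_ir, g_el, g_ir. auto. Qed.
Lemma g_inv_e : inv e = e.
Proof. symmetry. apply g_inv_uniq. apply g_el. Qed.
Lemma g_inv_inv a : inv (inv a) = a.
Proof. symmetry. apply g_inv_uniq. apply g_il. Qed.
Lemma g_cancel_r x y u : mul x u = mul y u -> x = y.
Proof. intros H. rewrite <- (g_er x), <- (g_er y), <- (g_ir u), <- !g_assoc, H. auto. Qed.
Lemma g_cancel_l x y u : mul u x = mul u y -> x = y.
Proof. intros H. rewrite <- (g_el x), <- (g_el y), <- (g_il u), !g_assoc, H. auto. Qed.

Definition wfold (w : list G) := fold_right mul e w.
Lemma wfold_app w1 w2 : wfold (w1 ++ w2) = mul (wfold w1) (wfold w2).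
Proof. induction w1; simpl. rewrite g_el; auto. unfold wfold in *; simpl. rewrite IHw1, g_assoc; auto. Qed.
Lemma wfold_inv w : wfold (rev (map inv w)) = inv (wfold w).
Proof. induction w; simpl. symmetry; apply g_inv_e.
  rewrite wfold_app, IHw. unfold wfold; simpl. rewrite g_er, g_inv_mul. auto. Qed.

Definition wle h n := word_le mul e Sg h n.
Definition wlen h n := word_length mul e Sg h n.

Lemma wle_mono h n m : wle h n -> (n <= m)%nat -> wle h m.
Proof. intros [w [H1 [H2 H3]]] Hm. exists w; repeat split; auto. lia. Qed.
Lemma wle_mul a b n m : wle a n -> wle b m -> wle (mul a b) (n + m).
Proof. intros [w [H1 [H2 H3]]] [v [K1 [K2 K3]]]. exists (w ++ v). repeat split.
  rewrite length_app; lia. apply Forall_app; auto.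
  change (wfold (w ++ v) = mul a b). rewrite wfold_app. unfold wfold; congruence. Qed.
Lemma wle_inv a n : wle a n -> wle (inv a) n.
Proof. intros [w [H1 [H2 H3]]]. exists (rev (map inv w)). repeat split.
  rewrite length_rev, length_map; auto.
  apply Forall_rev. apply Forall_map. eapply Forall_impl; [|exact H2]. simpl; auto.
  change (wfold (rev (map inv w)) = inv a). rewrite wfold_inv. unfold wfold; congruence. Qed.
Lemma wle_e : wle e 0.
Proof. exists []. repeat split; auto. Qed.
Lemma wle_gen s : In s Sg -> wle s 1.
Proof. intros H. exists [s]. repeat split; auto. simpl. apply g_er. Qed.

Lemma wlen_exists x k : wle x k -> exists n, wlen x n /\ (n <= k)%nat.
Proof. revert x. induction k; intros x H.
  - exists 0%nat. split; [|lia]. split; auto. intros; lia.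
  - destruct (classic (wle x k)) as [Hk|Hk].
    + destruct (IHk x Hk) as [n [? ?]]. exists n; split; auto.
    + exists (S k). split; [|lia]. split; auto. intros m Hm.
      destruct (Compare_dec.le_lt_dec (S k) m); auto. exfalso; apply Hk. apply (wle_mono x m); auto. lia.
Qed.
Lemma wlen_uniq x n m : wlen x n -> wlen x m -> n = m.
Proof. intros [H1 H2] [K1 K2]. specialize (H2 m K1). specialize (K2 n H1). lia. Qed.
Lemma wlen_le x n m : wlen x n -> wle x m -> (n <= m)%nat.
Proof. intros [_ H] K; auto. Qed.
Lemma wlen_wle x n : wlen x n -> wle x n.
Proof. intros [H _]; auto. Qed.

Fixpoint allw (k : nat) : list (list G) :=
  match k with
  | O => [[]]
  | S k' => [] :: flat_map (fun s => map (cons s) (allw k')) Sg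
  end.
Lemma allw_in k w : (length w <= k)%nat -> Forall (fun s => In s Sg) w -> In w (allw k).
Proof. revert w; induction k; intros w Hl Hf.
  - destruct w; simpl in *; [auto|lia].
  - destruct w as [|s w]; [left; auto|]. right. apply in_flat_map. exists s.
    inversion Hf; subst. split; auto. apply in_map. apply IHk; auto. simpl in Hl; lia.
Qed.
Lemma allw_prop k w : In w (allw k) -> (length w <= k)%nat /\ Forall (fun s => In s Sg) w.
Proof. revert w; induction k; intros w H.
  - simpl in H. destruct H as [<-|[]]. simpl; auto.
  - simpl in H. destruct H as [<-|H]. simpl; split; [lia|auto].
    apply in_flat_map in H. destruct H as [s [Hs H]]. apply in_map_iff in H.
    destruct H as [w' [<- H]]. destruct (IHk w' H). simpl; split; [lia|]. constructor; auto.
Qed.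

Lemma ball_ex k : exists L, NoDup L /\ forall x, In x L <-> exists n, wlen x n /\ (n <= k)%nat.
Proof. destruct (dedup_ex (map wfold (allw k)) (fun _ => True)) as [L [HL HLi]].
  exists L. split; auto. intros x. rewrite HLi. split.
  - intros [H _]. apply in_map_iff in H. destruct H as [w [<- Hw]]. apply allw_prop in Hw.
    apply wlen_exists. exists w; destruct Hw; repeat split; auto.
  - intros [n [Hn Hk]]. split; auto. destruct (wlen_wle _ _ Hn) as [w [H1 [H2 H3]]].
    apply in_map_iff. exists w. split; auto. apply allw_in; auto. lia.
Qed.
Lemma NoDup_map_inj {A B} (g : A -> B) l : (forall x y, In x l -> In y l -> g x = g y -> x = y) -> NoDup l -> NoDup (map g l).
Proof. intros Hi Hn; induction Hn as [|a l Ha Hn IH]; simpl; constructor.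
  - intros Hm. apply in_map_iff in Hm. destruct Hm as [y [Hy Hyl]].
    assert (y = a) by (apply Hi; simpl; auto). subst; contradiction.
  - apply IH. intros; apply Hi; simpl; auto.
Qed.
Lemma NoDup_pairs {A B} (Y : list A) (W : list B) : NoDup Y -> NoDup W ->
  NoDup (flat_map (fun y => map (fun w => (y, w)) W) Y).
Proof. intros HY HW; induction HY as [|y Y Hy HY IH]; simpl; [constructor|].
  apply NoDup_app; auto.
  - apply NoDup_map_inj; auto. intros a b _ _ H; inversion H; auto.
  - intros p Hp Hp2. apply in_map_iff in Hp. destruct Hp as [w [<- _]].
    apply in_flat_map in Hp2. destruct Hp2 as [y' [Hy' Hm]]. apply in_map_iff in Hm.
    destruct Hm as [w' [Heq _]]. inversion Heq; subst; contradiction.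
Qed.

Definition fsum (F : G -> R) (fl : list (G * G * R)) :=
  lsum (fun t => snd t * (F (mul (fst (fst t)) (snd (fst t))) - F (fst (fst t)))^2) fl.
Definition lsumlab (Gf : G -> R) (fl : list (G * G * R)) :=
  lsum (fun t => snd t * Gf (snd (fst t))) fl.

Lemma final (f mu : G -> R) (h : G) (fl : list (G*G*R)) (Wf K : R) (Wl : list G) (Ssum : R) :
  (forall t, In t fl -> 0 <= snd t) -> 0 <= Wf -> 0 <= K ->
  (forall F, (F h - F e)^2 <= Wf * fsum F fl) ->
  NoDup Wl ->
  (forall Gf, (forall w, 0 <= Gf w) -> lsumlab Gf fl <= K * lsum (fun w => mu w * Gf w) Wl) ->
  sums_to (fun p : G * G => (f (mul (fst p) (snd p)) - f (fst p))^2 * mu (snd p)) Ssum ->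
  forall l, NoDup l -> lsum (fun x => (f (mul x h) - f x)^2) l <= Wf * K * Ssum.
Proof.
  intros Hc HWf HK HA HWl HB Hs l Hl.
  set (q := fun y z => (f (mul y z) - f y)^2).
  assert (Hq : forall y z, 0 <= q y z) by (intros; apply pow2_ge_0).
  destruct (dedup_ex (flat_map (fun t => map (fun x => mul x (fst (fst t))) l) fl) (fun _ => True))
    as [Y [HY HYi]].
  apply Rle_trans with (lsum (fun x => Wf * fsum (fun g => f (mul x g)) fl) l).
  { apply lsum_le. intros x _. specialize (HA (fun g => f (mul x g))). simpl in HA.
    rewrite g_er in HA. exact HA. }
  rewrite lsum_scal. unfold fsum. rewrite lsum_swap.
  apply Rle_trans with (Wf * lsum (fun t => snd t * lsum (fun y => q y (snd (fst t))) Y) fl).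
  { apply Rmult_le_compat_l; auto. apply lsum_le. intros t Ht.
    rewrite <- lsum_scal. replace (lsum (fun y => snd t * q y (snd (fst t))) Y) with
      (snd t * lsum (fun y => q y (snd (fst t))) Y) by (rewrite lsum_scal; auto).
    rewrite lsum_scal. apply Rmult_le_compat_l; auto.
    apply Rle_trans with (lsum (fun y => q y (snd (fst t))) (map (fun x => mul x (fst (fst t))) l)).
    - rewrite lsum_map. right. apply lsum_ext. intros x _. unfold q. rewrite g_assoc. auto.
    - apply lsum_incl; auto.
      + apply NoDup_map_inj; auto. intros a b _ _ H. eapply g_cancel_r; eauto.
      + intros y Hy. apply HYi. split; auto. apply in_flat_map. exists t; auto. }
  apply Rle_trans with (Wf * lsum (fun y => K * lsum (fun w => mu w * q y w) Wl) Y).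
  { apply Rmult_le_compat_l; auto.
    replace (lsum (fun t => snd t * lsum (fun y => q y (snd (fst t))) Y) fl) with
      (lsum (fun y => lsumlab (q y) fl) Y).
    - apply lsum_le. intros y _. apply HB. intros; apply Hq.
    - unfold lsumlab. rewrite lsum_swap. apply lsum_ext. intros t _. rewrite lsum_scal; auto. }
  rewrite lsum_scal, <- Rmult_assoc. apply Rmult_le_compat_l; [apply Rmult_le_pos; auto|].
  replace (lsum (fun y => lsum (fun w => mu w * q y w) Wl) Y) with
    (lsum (fun p : G * G => (f (mul (fst p) (snd p)) - f (fst p))^2 * mu (snd p))
      (flat_map (fun y => map (fun w => (y, w)) Wl) Y)).
  - destruct Hs as [Hub _]. apply Hub. exists (flat_map (fun y => map (fun w => (y, w)) Wl) Y).
    split; auto. apply NoDup_pairs; auto.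
  - rewrite lsum_flat_map. apply lsum_ext. intros y _. rewrite lsum_map. apply lsum_ext.
    intros w _. simpl. unfold q. ring.
Qed.
Definition stepfl (a g : G) (Zl : list G) (k : R) : list (G*G*R) :=
  flat_map (fun z => [((a, z), 2*k/INR (length Zl)); ((mul a z, mul (inv z) g), 2*k/INR (length Zl))]) Zl.

Lemma fsum_app F l1 l2 : fsum F (l1 ++ l2) = fsum F l1 + fsum F l2.
Proof. unfold fsum; apply lsum_app. Qed.
Lemma fsum_nonneg F fl : (forall t, In t fl -> 0 <= snd t) -> 0 <= fsum F fl.
Proof. intros H. apply lsum_nonneg. intros t Ht. apply Rmult_le_pos; auto. apply pow2_ge_0. Qed.

Lemma stepfl_nonneg a g Zl k : 0 <= k -> forall t, In t (stepfl a g Zl k) -> 0 <= snd t.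
Proof. intros Hk t Ht. unfold stepfl in Ht. apply in_flat_map in Ht. destruct Ht as [z [_ Ht]].
  assert (0 <= 2 * k / INR (length Zl)).
  { unfold Rdiv. apply Rmult_le_pos; [lra|]. destruct (length Zl). simpl; rewrite Rinv_0; lra.
    left; apply Rinv_0_lt_compat. apply lt_0_INR; lia. }
  simpl in Ht. destruct Ht as [<-|[<-|[]]]; simpl; auto. Qed.

Lemma stepA a g Zl k F : Zl <> [] -> 0 <= k ->
  k * (F (mul a g) - F a)^2 <= fsum F (stepfl a g Zl k).
Proof. intros Hz Hk. set (N := INR (length Zl)).
  assert (HN : 0 < N). { unfold N. destruct Zl; [congruence|]. simpl length. apply lt_0_INR; lia. }
  unfold fsum, stepfl. rewrite lsum_flat_map.
  apply Rle_trans with (lsum (fun _ : G => k / N * (F (mul a g) - F a)^2) Zl).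
  - rewrite lsum_const. fold N. right. field. lra.
  - apply lsum_le. intros z _. rewrite lsum_cons, lsum_cons, lsum_nil. simpl fst; simpl snd.
    rewrite (g_assoc a z), <- (g_assoc z), g_ir, g_el. fold N.
    set (x := F (mul a z) - F a). set (y := F (mul a g) - F (mul a z)).
    replace (F (mul a g) - F a) with (x + y) by (unfold x, y; ring).
    assert (0 <= k / N) by (unfold Rdiv; apply Rmult_le_pos; [lra|left; apply Rinv_0_lt_compat; lra]).
    replace (2 * k / N) with (2 * (k/N)) by (field; lra).
    assert ((x+y)^2 <= 2 * x^2 + 2 * y^2) by (assert (0 <= (x-y)^2) by apply pow2_ge_0; nra).
    assert (k / N * (x+y)^2 <= k/N * (2 * x^2 + 2 * y^2)) by (apply Rmult_le_compat_l; auto). lra.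
Qed.

Lemma stepB a g Zl k (Ul : list G) Gf : 0 <= k -> NoDup Zl -> (forall z, In z Zl -> In z Ul) ->
  (forall z, In z Zl -> In (mul (inv z) g) Ul) -> (forall w, 0 <= Gf w) ->
  lsumlab Gf (stepfl a g Zl k) <= 4 * k / INR (length Zl) * lsum Gf Ul.
Proof. intros Hk HZ H1 H2 HG. unfold lsumlab, stepfl. rewrite lsum_flat_map.
  set (c := 2 * k / INR (length Zl)).
  assert (Hc : 0 <= c).
  { unfold c, Rdiv. apply Rmult_le_pos; [lra|]. destruct (length Zl). simpl; rewrite Rinv_0; lra.
    left; apply Rinv_0_lt_compat. apply lt_0_INR; lia. }
  replace (4 * k / INR (length Zl)) with (2 * c) by (unfold c, Rdiv; ring).
  apply Rle_trans with (lsum (fun z => c * Gf z) Zl + lsum (fun z => c * Gf (mul (inv z) g)) Zl).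
  - rewrite <- lsum_plus. right. apply lsum_ext. intros z _. rewrite lsum_cons, lsum_cons, lsum_nil.
    simpl. ring.
  - rewrite !lsum_scal.
    assert (lsum Gf Zl <= lsum Gf Ul) by (apply lsum_incl; auto).
    assert (lsum (fun z => Gf (mul (inv z) g)) Zl <= lsum Gf Ul).
    { rewrite <- (lsum_map Gf (fun z => mul (inv z) g)). apply lsum_incl; auto.
      - apply NoDup_map_inj; auto. intros x y _ _ Hxy. apply g_cancel_r in Hxy.
        rewrite <- (g_inv_inv x), Hxy, g_inv_inv; auto.
      - intros w Hw. apply in_map_iff in Hw. destruct Hw as [z [<- Hz]]. auto. }
    nra.
Qed.

Section Path.
Variable Zf Uf : nat -> list G.

Fixpoint pathfl (a : G) (ps : list (G * nat * R)) : list (G*G*R) :=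
  match ps with
  | [] => []
  | p :: rest => stepfl a (fst (fst p)) (Zf (snd (fst p))) (/ snd p) ++ pathfl (mul a (fst (fst p))) rest
  end.
Definition prodp (ps : list (G * nat * R)) := fold_right (fun p acc => mul (fst (fst p)) acc) e ps.

Lemma path_nonneg a ps : (forall p, In p ps -> 0 < snd p) -> forall t, In t (pathfl a ps) -> 0 <= snd t.
Proof. revert a; induction ps as [|p ps IH]; intros a Hp t Ht; simpl in Ht; [contradiction|].
  apply in_app_or in Ht. destruct Ht as [Ht|Ht].
  - eapply stepfl_nonneg; [|exact Ht]. left; apply Rinv_0_lt_compat, Hp; left; auto.
  - eapply IH; [|exact Ht]. intros; apply Hp; right; auto. Qed.

Lemma pathA ps : (forall p, In p ps -> 0 < snd p /\ Zf (snd (fst p)) <> []) ->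
  forall F a, (F (mul a (prodp ps)) - F a)^2 <= lsum snd ps * fsum F (pathfl a ps).
Proof. induction ps as [|p ps IH]; intros Hp F a.
  - unfold prodp; cbn [fold_right]. rewrite g_er. replace (F a - F a) with 0 by ring. rewrite lsum_nil. lra.
  - simpl pathfl. unfold prodp; simpl fold_right. fold (prodp ps).
    rewrite lsum_cons, fsum_app.
    destruct (Hp p (or_introl eq_refl)) as [Hw HZ].
    assert (Hps : forall p, In p ps -> 0 < snd p /\ Zf (snd (fst p)) <> []) by (intros; apply Hp; right; auto).
    specialize (IH Hps F (mul a (fst (fst p)))). rewrite g_assoc in IH.
    set (D := F (mul a (fst (fst p))) - F a).
    set (Sv := F (mul a (mul (fst (fst p)) (prodp ps))) - F (mul a (fst (fst p)))).
    replace (F (mul a (mul (fst (fst p)) (prodp ps))) - F a) with (D + Sv) by (unfold D, Sv; ring).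
    assert (HW : 0 <= lsum snd ps) by (apply lsum_nonneg; intros; left; apply Hps; auto).
    assert (HT : 0 <= fsum F (pathfl (mul a (fst (fst p))) ps)).
    { apply fsum_nonneg. apply path_nonneg. intros; apply Hps; auto. }
    assert (Hst := stepA a (fst (fst p)) (Zf (snd (fst p))) (/ snd p) F HZ (Rlt_le _ _ (Rinv_0_lt_compat _ Hw))).
    fold D in Hst.
    apply Rle_trans with ((snd p + lsum snd ps) * (D^2 / snd p + fsum F (pathfl (mul a (fst (fst p))) ps))).
    + apply CS_step; auto.
    + apply Rmult_le_compat_l; [lra|]. unfold Rdiv. rewrite Rmult_comm. lra.
Qed.

Lemma pathB ps Gf : (forall w, 0 <= Gf w) ->
  (forall p, In p ps -> 0 < snd p /\ NoDup (Zf (snd (fst p))) /\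
     (forall z, In z (Zf (snd (fst p))) -> In z (Uf (snd (fst p)))) /\
     (forall z, In z (Zf (snd (fst p))) -> In (mul (inv z) (fst (fst p))) (Uf (snd (fst p))))) ->
  forall a, lsumlab Gf (pathfl a ps) <=
     lsum (fun p => 4 * / snd p / INR (length (Zf (snd (fst p)))) * lsum Gf (Uf (snd (fst p)))) ps.
Proof. intros HG; induction ps as [|p ps IH]; intros Hp a.
  - cbn [pathfl]. unfold lsumlab. rewrite !lsum_nil. lra.
  - simpl pathfl. unfold lsumlab in *. rewrite lsum_app, lsum_cons.
    destruct (Hp p (or_introl eq_refl)) as [Hw [HN [H1 H2]]].
    apply Rplus_le_compat.
    + apply stepB; auto. left; apply Rinv_0_lt_compat; auto.
    + apply IH. intros; apply Hp; right; auto.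
Qed.
End Path.
Definition szsum (sz : list (nat * nat * R)) := fold_right (fun s acc => (fst (fst s) + acc)%nat) 0%nat sz.
Definition prel (p : G * nat * R) (s : nat * nat * R) :=
  snd (fst p) = snd (fst s) /\ snd p = snd s /\ wle (fst (fst p)) (fst (fst s)).

Lemma split_word sz : forall w, Forall (fun s => In s Sg) w -> (length w <= szsum sz)%nat ->
  exists ps, Forall2 prel ps sz /\ prodp ps = wfold w.
Proof. induction sz as [|s sz IH]; intros w Hw Hl.
  - exists []. split; [constructor|]. simpl in Hl. destruct w; simpl in *; [auto|lia].
  - destruct (IH (skipn (fst (fst s)) w)) as [ps [H1 H2]].
    + rewrite Forall_forall in *. intros x Hx. apply Hw. rewrite <- (firstn_skipn (fst (fst s)) w). apply in_or_app; auto.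
    + rewrite length_skipn. simpl in Hl. lia.
    + exists ((wfold (firstn (fst (fst s)) w), snd (fst s), snd s) :: ps). split.
      * constructor; auto. unfold prel; simpl. split; auto. split; auto.
        exists (firstn (fst (fst s)) w). repeat split.
        rewrite length_firstn; lia.
        rewrite Forall_forall in *. intros x Hx. apply Hw. rewrite <- (firstn_skipn (fst (fst s)) w). apply in_or_app; auto.
      * unfold prodp; simpl fold_right. fold (prodp ps). rewrite H2, <- wfold_app, firstn_skipn. auto.
Qed.

Lemma Forall2_lsum {A B} (P : A -> B -> Prop) (F1 : A -> R) (F2 : B -> R) l1 l2 :
  Forall2 P l1 l2 -> (forall a b, P a b -> F1 a = F2 b) -> lsum F1 l1 = lsum F2 l2.
Proof. intros H HF; induction H; auto. rewrite !lsum_cons. rewrite (HF _ _ H), IHForall2; auto. Qed.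
Lemma Forall2_in_l {A B} (P : A -> B -> Prop) l1 l2 a :
  Forall2 P l1 l2 -> In a l1 -> exists b, In b l2 /\ P a b.
Proof. intros H; induction H; simpl; [tauto|]. intros [<-|Hi].
  exists y; auto. destruct (IHForall2 Hi) as [b [? ?]]; exists b; auto. Qed.
Lemma geom_step (M j : nat) (g z : G) nz :
  wle g (M ^ (j - 1)) -> wlen z nz -> (2 * M ^ (j - 1) < nz <= M ^ j - M ^ (j - 1))%nat ->
  exists m, wlen (mul (inv z) g) m /\ (M ^ (j - 1) < m <= M ^ j)%nat.
Proof. intros Hg Hz [H1 H2].
  assert (Hu : wle (mul (inv z) g) (nz + M ^ (j-1))).
  { apply wle_mul; auto. apply wle_inv; auto. apply wlen_wle; auto. }
  destruct (wlen_exists _ _ Hu) as [m [Hm Hmle]]. exists m. split; auto. split; [|lia].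
  assert (Hz' : wle z (M ^ (j-1) + m)).
  { replace z with (mul g (inv (mul (inv z) g))).
    - apply wle_mul; auto. apply wle_inv; auto. apply wlen_wle; auto.
    - rewrite g_inv_mul, g_inv_inv, <- g_assoc, g_ir, g_el. auto. }
  pose proof (wlen_le _ _ _ Hz Hz'). lia.
Qed.

Lemma pow_mono_nat (M a b : nat) : (1 <= M)%nat -> (a <= b)%nat -> (M ^ a <= M ^ b)%nat.
Proof. intros HM Hab. apply Nat.pow_le_mono_r; lia. Qed.

Definition szl (M : nat) (m : nat -> nat) (psi : nat -> R) (J : nat) : list (nat * nat * R) :=
  flat_map (fun j => repeat ((M ^ (j - 1))%nat, j, psi j * INR (m j)) (m j)) (seq 1 J).

Lemma szsum_app l1 l2 : szsum (l1 ++ l2) = (szsum l1 + szsum l2)%nat.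
Proof. induction l1; simpl; auto. rewrite IHl1. lia. Qed.
Lemma szsum_rep (x : nat * nat * R) c : szsum (repeat x c) = (c * fst (fst x))%nat.
Proof. induction c; cbn [repeat]. reflexivity. change (szsum (x :: repeat x c)) with (fst (fst x) + szsum (repeat x c))%nat. rewrite IHc; lia. Qed.
Lemma szsum_gen M m psi J a : szsum (flat_map (fun j => repeat ((M ^ (j - 1))%nat, j, psi j * INR (m j)) (m j)) (seq a J))
  = fold_right (fun j acc => (m j * M ^ (j-1) + acc)%nat) 0%nat (seq a J).
Proof. revert a; induction J; intros a; simpl; auto.
  rewrite szsum_app, IHJ. f_equal. apply szsum_rep. Qed.
Lemma szsum_szl M m psi J : szsum (szl M m psi J) = fold_right (fun j acc => (m j * M ^ (j-1) + acc)%nat) 0%nat (seq 1 J).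
Proof. apply szsum_gen. Qed.

Lemma lsum_szl M m psi J (F : nat * nat * R -> R) :
  lsum F (szl M m psi J) = lsum (fun j => INR (m j) * F ((M ^ (j - 1))%nat, j, psi j * INR (m j))) (seq 1 J).
Proof. unfold szl. rewrite lsum_flat_map. apply lsum_ext. intros; apply lsum_repeat. Qed.

Lemma in_szl M m psi J s : In s (szl M m psi J) ->
  exists j, (1 <= j <= J)%nat /\ (1 <= m j)%nat /\ s = ((M ^ (j - 1))%nat, j, psi j * INR (m j)).
Proof. unfold szl. intros H. apply in_flat_map in H. destruct H as [j [Hj Hs]].
  apply in_seq in Hj. exists j.
  assert (1 <= m j)%nat.
  { destruct (Nat.eq_dec (m j) 0) as [E|E]; [|lia]. rewrite E in Hs. simpl in Hs; contradiction. }
  apply repeat_spec in Hs. split; [lia|split; [lia|auto]]. Qed.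

Section Assemble.
Variable M : nat.
Hypothesis HM : (2 <= M)%nat.
Variable Zf Uf : nat -> list G.
Hypothesis HZ : forall j, (1 <= j)%nat -> NoDup (Zf j) /\ Zf j <> [] /\
  forall z, In z (Zf j) -> exists nz, wlen z nz /\ (2 * M ^ (j - 1) < nz <= M ^ j - M ^ (j - 1))%nat.
Hypothesis HU : forall j, (1 <= j)%nat -> NoDup (Uf j) /\
  forall w, In w (Uf j) <-> exists n, wlen w n /\ (M ^ (j - 1) < n <= M ^ j)%nat.

Lemma Uf_disj j j' w : (1 <= j < j')%nat -> In w (Uf j) -> In w (Uf j') -> False.
Proof. intros Hj H1 H2. apply (HU j) in H1; [|lia]. apply (HU j') in H2; [|lia].
  destruct H1 as [n [Hn Hn']]. destruct H2 as [n' [Hn2 Hn2']].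
  rewrite (wlen_uniq _ _ _ Hn2 Hn) in Hn2'.
  assert (M ^ j <= M ^ (j' - 1))%nat by (apply pow_mono_nat; lia). lia. Qed.

Lemma Wl_nodup a k : (1 <= a)%nat -> NoDup (flat_map Uf (seq a k)).
Proof. revert a; induction k; intros a Ha; simpl; [constructor|].
  apply NoDup_app; [apply HU; auto|apply IHk; lia|].
  intros w H1 H2. apply in_flat_map in H2. destruct H2 as [j [Hj H2]]. apply in_seq in Hj.
  apply (Uf_disj a j w); auto; lia. Qed.

Lemma assemble (f mu : G -> R) (Hmu : forall w, 0 <= mu w) (h : G) (n : nat) (Hh : wlen h n)
  (m : nat -> nat) (psi : nat -> R) (J : nat) (K0 : R) (HK0 : 0 <= K0)
  (Hpsi : forall j, (1 <= j <= J)%nat -> 0 < psi j)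
  (Hcov : (n <= fold_right (fun j acc => (m j * M ^ (j-1) + acc)%nat) 0%nat (seq 1 J))%nat)
  (Hmu_lb : forall j w, (1 <= j <= J)%nat -> In w (Uf j) -> 4 / (psi j * INR (length (Zf j))) <= K0 * mu w)
  (Ssum : R)
  (HS : sums_to (fun p : G * G => (f (mul (fst p) (snd p)) - f (fst p))^2 * mu (snd p)) Ssum) :
  forall l, NoDup l -> lsum (fun x => (f (mul x h) - f x)^2) l <=
     lsum (fun j => INR (m j) * (psi j * INR (m j))) (seq 1 J) * K0 * Ssum.
Proof.
  intros l Hl.
  destruct (wlen_wle _ _ Hh) as [w0 [Hw0l [Hw0f Hw0]]].
  set (sz := szl M m psi J).
  destruct (split_word sz w0 Hw0f) as [ps [Hps Hprod]].
  { unfold sz. rewrite szsum_szl. lia. }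
  assert (Hpin : forall p, In p ps -> exists j, (1 <= j <= J)%nat /\ (1 <= m j)%nat /\
     snd (fst p) = j /\ snd p = psi j * INR (m j) /\ wle (fst (fst p)) (M ^ (j - 1))).
  { intros p Hp. destruct (Forall2_in_l _ _ _ _ Hps Hp) as [s [Hs [E1 [E2 E3]]]].
    destruct (in_szl _ _ _ _ _ Hs) as [j [Hj [Hmj ->]]]. exists j. simpl in *. auto. }
  assert (HWf : lsum snd ps = lsum (fun j => INR (m j) * (psi j * INR (m j))) (seq 1 J)).
  { rewrite (Forall2_lsum prel snd snd ps sz Hps). unfold sz. rewrite lsum_szl. auto.
    intros a b [_ [E _]]; auto. }
  rewrite <- HWf.
  apply (final f mu h (pathfl Zf e ps) (lsum snd ps) K0 (flat_map Uf (seq 1 J)) Ssum); auto.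
  - apply path_nonneg. intros p Hp. destruct (Hpin p Hp) as [j [Hj [Hmj [E1 [E2 _]]]]].
    rewrite E2. apply Rmult_lt_0_compat; [apply Hpsi; auto|apply lt_0_INR; lia].
  - apply lsum_nonneg. intros p Hp. destruct (Hpin p Hp) as [j [Hj [Hmj [E1 [E2 _]]]]].
    rewrite E2. left; apply Rmult_lt_0_compat; [apply Hpsi; auto|apply lt_0_INR; lia].
  - intros F. assert (Hph : prodp ps = h) by (rewrite Hprod; exact Hw0). rewrite <- Hph. rewrite <- (g_el (prodp ps)) at 1. apply pathA.
    intros p Hp. destruct (Hpin p Hp) as [j [Hj [Hmj [E1 [E2 _]]]]]. rewrite E1, E2. split.
    apply Rmult_lt_0_compat; [apply Hpsi; auto|apply lt_0_INR; lia]. apply HZ; lia.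
  - apply Wl_nodup; lia.
  - intros Gf HG. eapply Rle_trans; [apply (pathB Zf Uf); auto|].
    + intros p Hp. destruct (Hpin p Hp) as [j [Hj [Hmj [E1 [E2 E3]]]]]. rewrite E1, E2.
      destruct (HZ j) as [HZ1 [HZ2 HZ3]]; [lia|]. split; [|split; [auto|split]].
      * apply Rmult_lt_0_compat; [apply Hpsi; auto|apply lt_0_INR; lia].
      * intros z Hz. destruct (HZ3 z Hz) as [nz [Hnz Hnzr]]. apply HU; [lia|].
        exists nz. split; auto. split; [|lia].
        assert (M ^ (j-1) <= 2 * M ^ (j-1))%nat by lia. lia.
      * intros z Hz. destruct (HZ3 z Hz) as [nz [Hnz Hnzr]]. apply HU; [lia|].
        apply (geom_step M j (fst (fst p)) z nz); auto.
    + rewrite (Forall2_lsum prel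
        (fun p => 4 * / snd p / INR (length (Zf (snd (fst p)))) * lsum Gf (Uf (snd (fst p))))
        (fun s => 4 * / snd s / INR (length (Zf (snd (fst s)))) * lsum Gf (Uf (snd (fst s)))) ps sz Hps).
      2:{ intros a b [E1 [E2 _]]. rewrite E1, E2. auto. }
      unfold sz. rewrite lsum_szl. rewrite lsum_flat_map, <- lsum_scal.
      apply lsum_le. intros j Hj. apply in_seq in Hj. simpl fst; simpl snd.
      assert (HNj : 0 < INR (length (Zf j))).
      { destruct (HZ j) as [_ [HZ2 _]]; [lia|]. destruct (Zf j); [congruence|]. simpl length. apply lt_0_INR; lia. }
      assert (Hp := Hpsi j ltac:(lia)).
      assert (HX : 0 <= lsum Gf (Uf j)) by (apply lsum_nonneg; auto).
      apply Rle_trans with (4 / (psi j * INR (length (Zf j))) * lsum Gf (Uf j)).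
      * destruct (m j) eqn:E.
        -- simpl INR. rewrite Rmult_0_l. apply Rmult_le_pos; auto. unfold Rdiv.
           apply Rmult_le_pos; [lra|]. left; apply Rinv_0_lt_compat; nra.
        -- right. assert (0 < INR (S n0)) by (apply lt_0_INR; lia). field. lra.
      * rewrite <- lsum_scal, <- (lsum_scal K0). apply lsum_le. intros w Hw.
        specialize (Hmu_lb j w ltac:(lia) Hw). specialize (HG w).
        replace (K0 * (mu w * Gf w)) with ((K0 * mu w) * Gf w) by ring.
        apply Rmult_le_compat_r; auto.
Qed.
End Assemble.
Lemma shell_ex lo hi : exists L, NoDup L /\ forall x, In x L <-> exists n, wlen x n /\ (lo < n <= hi)%nat.
Proof. destruct (ball_ex hi) as [B [HB HBi]].
  destruct (dedup_ex B (fun x => exists n, wlen x n /\ (lo < n)%nat)) as [L [HL HLi]].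
  exists L. split; auto. intros x. rewrite HLi, HBi. split.
  - intros [[n [Hn Hn']] [n' [Hn2 Hn2']]]. rewrite (wlen_uniq _ _ _ Hn2 Hn) in Hn2'. exists n; split; auto; lia.
  - intros [n [Hn Hn']]. split; exists n; split; auto; lia.
Qed.

Lemma shell_funs (Mn : nat) : exists Zf Uf : nat -> list G,
  (forall j, NoDup (Zf j) /\ forall z, In z (Zf j) <-> exists nz, wlen z nz /\ (2 * Mn ^ (j - 1) < nz <= Mn ^ j - Mn ^ (j - 1))%nat) /\
  (forall j, NoDup (Uf j) /\ forall w, In w (Uf j) <-> exists n, wlen w n /\ (Mn ^ (j - 1) < n <= Mn ^ j)%nat).
Proof.
  exists (fun j => proj1_sig (constructive_indefinite_description _ (shell_ex (2 * Mn ^ (j - 1)) (Mn ^ j - Mn ^ (j - 1))))).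
  exists (fun j => proj1_sig (constructive_indefinite_description _ (shell_ex (Mn ^ (j - 1)) (Mn ^ j)))).
  split; intros j.
  - destruct (constructive_indefinite_description _ _) as [L HL]; simpl; auto.
  - destruct (constructive_indefinite_description _ _) as [L HL]; simpl; auto.
Qed.

Lemma vol_shell (d c1 c2 : R) (Hd : 0 < d) (Hc1 : 0 < c1) (Hc2 : 0 < c2)
  (Hvl : forall r, 1 <= r -> forall l : list G, NoDup l ->
       (forall h, In h l <-> exists n, word_length mul e Sg h n /\ INR n <= r) ->
       c1 * Rpower r d <= INR (length l) <= c2 * Rpower r d)
  (Mn : nat) (HMn : (4 <= Mn)%nat) (Hk : Rpower (4 / INR Mn) d <= c1 / (2 * c2))
  (j : nat) (Hj : (1 <= j)%nat) (Z : list G) (HZn : NoDup Z)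
  (HZ : forall z, In z Z <-> exists nz, wlen z nz /\ (2 * Mn ^ (j - 1) < nz <= Mn ^ j - Mn ^ (j - 1))%nat) :
  c1 * Rpower (1/2) d / 2 * Rpower (INR Mn ^ j) d <= INR (length Z).
Proof.
  set (A := (Mn ^ j - Mn ^ (j - 1))%nat). set (B := (2 * Mn ^ (j - 1))%nat).
  destruct (ball_ex A) as [LA [HLA HLAi]].
  destruct (ball_ex B) as [LB [HLB HLBi]].
  assert (Hpow : (Mn ^ j = Mn * Mn ^ (j - 1))%nat).
  { destruct j; [lia|]. simpl. rewrite Nat.sub_0_r. auto. }
  assert (Hp1 : (1 <= Mn ^ (j - 1))%nat). { assert (Mn ^ (j-1) <> 0)%nat by (apply Nat.pow_nonzero; lia). lia. }
  assert (HAB : (B <= A)%nat). { unfold A, B. rewrite Hpow. nia. }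
  assert (Hlen : (length LA <= length Z + length LB)%nat).
  { rewrite <- length_app. apply NoDup_incl_length; auto. intros x Hx. apply HLAi in Hx.
    destruct Hx as [n [Hn Hn']]. apply in_or_app. destruct (Compare_dec.le_lt_dec n B).
    - right. apply HLBi. exists n; auto.
    - left. apply HZ. exists n. split; [auto|]. unfold A, B in *. lia. }
  set (Y := INR Mn ^ (j - 1)). set (Mr := INR Mn).
  assert (HMr : 4 <= Mr) by (unfold Mr; replace 4 with (INR 4) by (simpl; lra); apply le_INR; auto).
  assert (HY : 1 <= Y) by (unfold Y; apply pow_R1_Rle; unfold Mr in *; lra).
  assert (HX : Mr ^ j = Mr * Y). { unfold Y, Mr. rewrite <- !pow_INR, <- mult_INR. f_equal. auto. }
  assert (HAr : INR A = Mr * Y - Y). { unfold A. rewrite minus_INR by (rewrite Hpow; nia). rewrite !pow_INR. fold Mr. fold Y. rewrite <- HX. auto. }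
  assert (HBr : INR B = 2 * Y). { unfold B. rewrite mult_INR, pow_INR. simpl. auto. }
  assert (HvA := Hvl (INR A) ltac:(rewrite HAr; nra) LA HLA).
  assert (HvB := Hvl (INR B) ltac:(rewrite HBr; lra) LB HLB).
  destruct HvA as [HvA _].
  { intros x. rewrite HLAi. split; intros [n [Hn Hn']]; exists n; split; auto.
    apply le_INR; auto. apply INR_le; auto. }
  destruct HvB as [_ HvB].
  { intros x. rewrite HLBi. split; intros [n [Hn Hn']]; exists n; split; auto.
    apply le_INR; auto. apply INR_le; auto. }
  apply le_INR in Hlen. rewrite plus_INR in Hlen.
  rewrite HX.
  assert (HRA : Rpower (Mr * Y) d * Rpower (1/2) d <= Rpower (INR A) d).
  { rewrite <- Rpower_mul by nra. apply Rle_Rpower_l; [lra|]. rewrite HAr. nra. }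
  assert (HRB : Rpower (INR B) d = Rpower (Mr * Y) d * (Rpower (1/2) d * Rpower (4 / Mr) d)).
  { rewrite <- Rpower_mul by (unfold Rdiv; try apply Rmult_lt_0_compat; try apply Rinv_0_lt_compat; lra).
    rewrite <- Rpower_mul. 2: nra. 2: (apply Rmult_lt_0_compat; [lra|]; unfold Rdiv; apply Rmult_lt_0_compat; [lra|apply Rinv_0_lt_compat; lra]).
    rewrite HBr. f_equal. field. lra. }
  assert (Hp : 0 < Rpower (Mr * Y) d * Rpower (1/2) d) by (apply Rmult_lt_0_compat; apply Rpower_pos).
  fold Mr in Hk.
  assert (c2 * Rpower (4 / Mr) d <= c1 / 2).
  { apply (Rmult_le_compat_l c2) in Hk; [|lra]. replace (c2 * (c1 / (2 * c2))) with (c1/2) in Hk by (field; lra). lra. }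
  assert (c2 * Rpower (INR B) d <= Rpower (Mr * Y) d * Rpower (1/2) d * (c1/2)).
  { rewrite HRB. replace (c2 * (Rpower (Mr * Y) d * (Rpower (1 / 2) d * Rpower (4 / Mr) d))) with
      ((Rpower (Mr * Y) d * Rpower (1/2) d) * (c2 * Rpower (4 / Mr) d)) by ring.
    apply Rmult_le_compat_l; lra. }
  assert (c1 * (Rpower (Mr * Y) d * Rpower (1/2) d) <= c1 * Rpower (INR A) d) by (apply Rmult_le_compat_l; lra).
  lra.
Qed.
End Grp.
Section PhiInt.
Variable phi : R -> R.
Hypothesis Hphi_pos : forall t, 0 < t -> 0 < phi t.
Hypothesis Hphi_incr : forall s t, 0 < s -> s <= t -> phi s <= phi t.
Definition f0 := fun s => s / phi s.

Lemma f0_up u v s : 0 < u -> u <= s <= v -> f0 s <= v / phi u.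
Proof. intros Hu [H1 H2]. unfold f0. assert (0 < phi u) by auto. assert (phi u <= phi s) by (apply Hphi_incr; lra).
  unfold Rdiv. apply Rmult_le_compat; try lra. left; apply Rinv_0_lt_compat; lra.
  apply Rinv_le_contravar; lra. Qed.
Lemma f0_lo u v s : 0 < u -> u <= s <= v -> u / phi v <= f0 s.
Proof. intros Hu [H1 H2]. unfold f0. assert (0 < phi s) by (apply Hphi_pos; lra). assert (phi s <= phi v) by (apply Hphi_incr; lra).
  unfold Rdiv. apply Rmult_le_compat; try lra. left; apply Rinv_0_lt_compat; lra.
  apply Rinv_le_contravar; lra. Qed.
Lemma int_up u v (pr : Riemann_integrable f0 u v) : 0 < u -> u <= v -> RiemannInt pr <= (v / phi u) * (v - u).
Proof. intros Hu Huv. rewrite <- (RiemannInt_P15 (RiemannInt_P14 u v (v/phi u))).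
  apply RiemannInt_P19; auto. intros x Hx. unfold fct_cte. apply (f0_up u v x); lra. Qed.
Lemma int_lo u v (pr : Riemann_integrable f0 u v) : 0 < u -> u <= v -> (u / phi v) * (v - u) <= RiemannInt pr.
Proof. intros Hu Huv. rewrite <- (RiemannInt_P15 (RiemannInt_P14 u v (u/phi v))).
  apply RiemannInt_P19; auto. intros x Hx. unfold fct_cte. apply (f0_lo u v x); lra. Qed.

Hypothesis Hint : forall t, 1 <= t -> exists I, improper_int0 f0 t I.

Lemma f0_integrable u v : 0 < u -> u <= v -> 1 <= v -> inhabited (Riemann_integrable f0 u v).
Proof. intros Hu Huv Hv. destruct (Hint v Hv) as [I HI]. destruct (HI 1 ltac:(lra)) as [d [Hd Hd']].
  destruct (Hd' (Rmin d u / 2)) as [pr _].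
  { split. apply Rmult_lt_0_compat; [apply Rmin_pos; lra|lra]. assert (Rmin d u <= d) by apply Rmin_l.
    assert (0 < Rmin d u) by (apply Rmin_pos; lra). lra. }
  constructor. apply (@RiemannInt_P23 f0 (Rmin d u / 2) v u pr). split; [|lra].
  assert (Rmin d u <= u) by apply Rmin_r. assert (0 < Rmin d u) by (apply Rmin_pos; lra). lra. Qed.

Lemma I_pos t I : 1 <= t -> improper_int0 f0 t I -> 0 < I.
Proof. intros Ht HI. set (L := (1/2) / phi t * (t - 1/2)).
  assert (HL : 0 < L). { unfold L. assert (0 < phi t) by (apply Hphi_pos; lra).
    apply Rmult_lt_0_compat; [|lra]. unfold Rdiv. apply Rmult_lt_0_compat; [lra|apply Rinv_0_lt_compat; lra]. }
  destruct (HI (L/2) ltac:(lra)) as [d [Hd Hd']].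
  set (a := Rmin d (1/2) / 2). assert (Ha : 0 < a < d).
  { unfold a. assert (Rmin d (1/2) <= d) by apply Rmin_l. assert (0 < Rmin d (1/2)) by (apply Rmin_pos; lra). lra. }
  assert (Ha2 : a <= 1/2). { unfold a. assert (Rmin d (1/2) <= 1/2) by apply Rmin_r. assert (0 < Rmin d (1/2)) by (apply Rmin_pos; lra). lra. }
  destruct (Hd' a Ha) as [pr Hpr].
  assert (pr1 : Riemann_integrable f0 a (1/2)) by (apply (@RiemannInt_P22 f0 a t); auto; lra).
  assert (pr2 : Riemann_integrable f0 (1/2) t) by (apply (@RiemannInt_P23 f0 a t); auto; lra).
  rewrite <- (RiemannInt_P26 pr1 pr2 pr) in Hpr.
  assert (H1 := int_lo a (1/2) pr1 ltac:(lra) Ha2).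
  assert (H2 := int_lo (1/2) t pr2 ltac:(lra) ltac:(lra)).
  assert (0 <= a / phi (1/2) * (1/2 - a)).
  { apply Rmult_le_pos; [|lra]. unfold Rdiv. apply Rmult_le_pos; [lra|]. left; apply Rinv_0_lt_compat; apply Hphi_pos; lra. }
  fold L in H2. apply Rabs_def2 in Hpr. lra. Qed.

Lemma I_split t I I1 (pr : Riemann_integrable f0 1 t) : 1 <= t -> improper_int0 f0 t I -> improper_int0 f0 1 I1 ->
  I <= I1 + RiemannInt pr.
Proof. intros Ht HI HI1. apply Rnot_lt_le. intros Hlt. set (eps := (I - I1 - RiemannInt pr) / 4).
  assert (He : 0 < eps) by (unfold eps; lra).
  destruct (HI eps He) as [d [Hd Hd']]. destruct (HI1 eps He) as [d1 [Hd1 Hd1']].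
  set (a := Rmin (Rmin d d1) 1 / 2).
  assert (0 < Rmin (Rmin d d1) 1) by (apply Rmin_pos; [apply Rmin_pos|]; lra).
  assert (Rmin (Rmin d d1) 1 <= Rmin d d1) by apply Rmin_l.
  assert (Rmin (Rmin d d1) 1 <= 1) by apply Rmin_r.
  assert (Rmin d d1 <= d) by apply Rmin_l. assert (Rmin d d1 <= d1) by apply Rmin_r.
  destruct (Hd' a ltac:(unfold a; lra)) as [pra Ha]. destruct (Hd1' a ltac:(unfold a; lra)) as [pra1 Ha1].
  rewrite <- (RiemannInt_P26 pra1 pr pra) in Ha.
  apply Rabs_def2 in Ha. apply Rabs_def2 in Ha1. unfold eps in *. lra. Qed.

Lemma I3 (Mr : R) (HMr : 1 <= Mr) : forall k t (pr : Riemann_integrable f0 1 t), 1 <= t <= Mr ^ k ->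
  RiemannInt pr <= lsum (fun j => Mr ^ (2 * j) / phi (Mr ^ (j - 1))) (seq 1 k).
Proof. induction k; intros t pr Ht.
  - simpl in Ht. assert (t = 1) by lra. subst t. rewrite RiemannInt_P9. simpl. unfold lsum; simpl; lra.
  - rewrite seq_S, lsum_app. simpl (1 + k)%nat.
    assert (Hpk : 1 <= Mr ^ k) by (apply pow_R1_Rle; lra).
    assert (Hterm : 0 <= Mr ^ (2 * S k) / phi (Mr ^ (S k - 1))).
    { unfold Rdiv. apply Rmult_le_pos. apply pow_le; lra. left; apply Rinv_0_lt_compat, Hphi_pos.
      apply pow_lt; lra. }
    rewrite lsum_cons, lsum_nil.
    destruct (Rle_lt_dec t (Mr ^ k)) as [Hle|Hlt].
    + assert (IH' := IHk t pr ltac:(lra)). lra.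
    + assert (pr1 : Riemann_integrable f0 1 (Mr ^ k)) by (apply (@RiemannInt_P22 f0 1 t); auto; lra).
      assert (pr2 : Riemann_integrable f0 (Mr ^ k) t) by (apply (@RiemannInt_P23 f0 1 t); auto; lra).
      rewrite <- (RiemannInt_P26 pr1 pr2 pr).
      assert (IH' := IHk (Mr ^ k) pr1 ltac:(lra)).
      assert (H2 := int_up (Mr ^ k) t pr2 ltac:(lra) ltac:(lra)).
      replace (S k - 1)%nat with k by lia.
      assert (t / phi (Mr ^ k) * (t - Mr ^ k) <= Mr ^ (2 * S k) / phi (Mr ^ k)).
      { assert (0 < phi (Mr ^ k)) by (apply Hphi_pos; lra).
        destruct Ht as [_ Ht]. simpl in Ht.
        replace (Mr ^ (2 * S k)) with ((Mr * Mr ^ k) * (Mr * Mr ^ k)) by (replace (2 * S k)%nat with (S k + S k)%nat by lia; rewrite pow_add; simpl; ring).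
        unfold Rdiv. rewrite (Rmult_comm t), Rmult_assoc. rewrite (Rmult_comm ((Mr * Mr^k) * (Mr * Mr^k))).
        apply Rmult_le_compat_l. left; apply Rinv_0_lt_compat; auto.
        assert (0 <= t - Mr ^ k) by lra. assert (t - Mr^k <= Mr * Mr^k) by lra. nra. }
      lra.
Qed.
End PhiInt.
Lemma INR_fold (m : nat -> nat) (Mn : nat) l :
  INR (fold_right (fun j acc => (m j * Mn ^ (j-1) + acc)%nat) 0%nat l) =
  lsum (fun j => INR (m j) * INR Mn ^ (j-1)) l.
Proof. induction l; simpl; auto. rewrite plus_INR, mult_INR, pow_INR, IHl. auto. Qed.

Lemma least_nat N : forall (P : nat -> Prop), (exists k, (k <= N)%nat /\ P k) -> exists n, P n /\ forall k, (k < n)%nat -> ~ P k.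
Proof. induction N; intros P [k [Hk HPk]].
  - exists 0%nat. assert (k = 0%nat) by lia. subst. split; auto. intros; lia.
  - destruct (classic (exists k, (k <= N)%nat /\ P k)) as [Hex|Hno].
    + apply IHN; auto.
    + exists k. split; auto. intros k' Hk' HPk'. apply Hno. exists k'. split; auto. lia.
Qed.

Definition ceil_nat (x : R) : nat := Z.to_nat (up x).
Lemma ceil_nat_spec x : 0 <= x -> x < INR (ceil_nat x) <= x + 1.
Proof. intros Hx. destruct (archimed x) as [H1 H2].
  assert (Hp : (0 <= up x)%Z). { apply le_IZR. lra. }
  unfold ceil_nat. rewrite INR_IZR_INZ, Z2Nat.id; auto. lra. Qed.

Lemma pow_ge_n (Mr : R) n : 2 <= Mr -> INR n <= Mr ^ n.
Proof. intros H. induction n. simpl; lra. rewrite S_INR. simpl.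
  assert (1 <= Mr ^ n) by (apply pow_R1_Rle; lra). nra. Qed.

Lemma geom_le (Mr : R) J : 2 <= Mr -> (1 <= J)%nat -> lsum (fun j => Mr ^ (j - 1)) (seq 1 J) <= 2 * Mr ^ (J - 1).
Proof. intros HM HJ. induction J; [lia|]. destruct J.
  - simpl. unfold lsum; simpl. lra.
  - rewrite seq_S, lsum_app, lsum_cons, lsum_nil. specialize (IHJ ltac:(lia)).
    replace (1 + S J - 1)%nat with (S J) by lia. replace (S (S J) - 1)%nat with (S J) by lia.
    replace (S J - 1)%nat with J in IHJ by lia. simpl. simpl in IHJ.
    assert (0 <= Mr ^ J) by (apply pow_le; lra). nra. Qed.

Lemma lsum_ge_term {T} (F : T -> R) l a : In a l -> (forall x, In x l -> 0 <= F x) -> F a <= lsum F l.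
Proof. induction l; [simpl; tauto|]. intros [<-|H] Hf; rewrite lsum_cons.
  - assert (0 <= lsum F l) by (apply lsum_nonneg; intros; apply Hf; simpl; auto). lra.
  - assert (0 <= F a0) by (apply Hf; simpl; auto). assert (F a <= lsum F l) by (apply IHl; auto; intros; apply Hf; simpl; auto). lra. Qed.
Section Params.
Variable phi : R -> R.
Hypothesis Hphi_pos : forall t, 0 < t -> 0 < phi t.
Hypothesis Hphi_incr : forall s t, 0 < s -> s <= t -> phi s <= phi t.
Hypothesis Hint : forall t, 1 <= t -> exists I, improper_int0 (f0 phi) t I.
Variable Mn : nat.
Hypothesis HMn : (4 <= Mn)%nat.
Variable A : R.
Hypothesis HA : forall j, (1 <= j)%nat -> phi (INR Mn ^ j) <= A * phi (INR Mn ^ (j - 1)).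
Variable I1 : R.
Hypothesis HI1 : improper_int0 (f0 phi) 1 I1.

Lemma params : exists K1, 0 <= K1 /\ forall R0 I, 1 <= R0 -> improper_int0 (f0 phi) R0 I ->
  exists J (m : nat -> nat),
    R0 <= lsum (fun j => INR (m j) * INR Mn ^ (j-1)) (seq 1 J) /\
    lsum (fun j => INR (m j) * (phi (INR Mn ^ j) * INR (m j))) (seq 1 J) <= K1 * (R0 ^ 2 / I).
Proof.
  set (Mr := INR Mn).
  assert (HMr : 4 <= Mr) by (unfold Mr; replace 4 with (INR 4) by (simpl; lra); apply le_INR; auto).
  assert (HI1p : 0 < I1) by (apply (I_pos phi Hphi_pos Hphi_incr 1); auto; lra).
  assert (HpM : 0 < phi Mr) by (apply Hphi_pos; lra).
  assert (Hp1 : 0 < phi 1) by (apply Hphi_pos; lra).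
  assert (HA0 : 0 <= A).
  { assert (H := HA 1%nat ltac:(lia)). simpl in H. rewrite Rmult_1_r in H. fold Mr in H.
    destruct (Rle_dec 0 A); auto. assert (0 < phi Mr) by auto. nra. }
  set (K1 := 16 * phi Mr * (I1 + Mr ^ 2 / phi 1) + 9 * (I1 * phi Mr + Mr ^ 2 * A + Mr ^ 4)).
  assert (HK1a : 0 <= 16 * phi Mr * (I1 + Mr ^ 2 / phi 1)).
  { apply Rmult_le_pos; [lra|]. assert (0 <= Mr^2 / phi 1) by (unfold Rdiv; apply Rmult_le_pos; [apply pow2_ge_0|left; apply Rinv_0_lt_compat; lra]). lra. }
  assert (HK1b : 0 <= 9 * (I1 * phi Mr + Mr ^ 2 * A + Mr ^ 4)).
  { assert (0 <= I1 * phi Mr) by nra. assert (0 <= Mr^2 * A) by (apply Rmult_le_pos; auto; apply pow2_ge_0).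
    assert (0 <= Mr^4) by (apply pow_le; lra). lra. }
  exists K1. split; [unfold K1; lra|]. intros R0 I HR0 HI.
  assert (HIp : 0 < I) by (apply (I_pos phi Hphi_pos Hphi_incr R0); auto).
  destruct (f0_integrable phi Hint 1 R0 ltac:(lra) HR0 HR0) as [pr].
  assert (Hsplit := I_split phi R0 I I1 pr HR0 HI HI1).
  assert (HR2 : 1 <= R0 ^ 2) by nra.
  destruct (Rlt_le_dec R0 4) as [Hsmall|Hbig].
  - exists 1%nat, (fun _ => 4%nat). split.
    + unfold lsum; simpl. lra.
    + unfold lsum; simpl. rewrite Rmult_1_r. fold Mr.
      assert (H3 := I3 phi Hphi_pos Hphi_incr Mr ltac:(lra) 1 R0 pr ltac:(simpl; lra)).
      unfold lsum in H3; simpl in H3. rewrite Rmult_1_r in H3.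
      replace (Mr ^ 2) with (Mr * Mr) in * by ring.
      assert (Hc : (4 * (phi Mr * 4) + 0) * I <= K1 * R0 ^ 2).
      { apply Rle_trans with (16 * phi Mr * (I1 + Mr * Mr / phi 1)).
        - replace ((4 * (phi Mr * 4) + 0) * I) with (16 * phi Mr * I) by ring.
          apply Rmult_le_compat_l; [lra|]. lra.
        - unfold K1. replace (Mr ^ 2) with (Mr * Mr) by ring. nra. }
      unfold Rdiv. apply (Rmult_le_reg_r I); auto. rewrite Rmult_assoc, (Rmult_assoc _ (/ I)), Rinv_l, Rmult_1_r; lra.
  - assert (Hpow : forall j, 1 <= Mr ^ j) by (intros; apply pow_R1_Rle; lra).
    assert (Hpos : forall j, 0 < phi (Mr ^ j)) by (intros; apply Hphi_pos; specialize (Hpow j); lra).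
    destruct (least_nat (ceil_nat R0) (fun J => R0 / 4 < Mr ^ J)) as [J [HJ HJmin]].
    { exists (ceil_nat R0). split; auto. assert (H := ceil_nat_spec R0 ltac:(lra)).
      assert (H2 := pow_ge_n Mr (ceil_nat R0) ltac:(lra)). lra. }
    assert (HJ1 : (1 <= J)%nat). { destruct J; [simpl in HJ; lra|lia]. }
    assert (HJm : Mr ^ (J - 1) <= R0 / 4). { apply Rnot_lt_le. apply HJmin. lia. }
    set (psi := fun j => phi (Mr ^ j)).
    set (y := fun j => Mr ^ (2 * (j - 1)) / psi j).
    assert (Hy : forall j, 0 < y j).
    { intros j. unfold y, psi. unfold Rdiv. apply Rmult_lt_0_compat. apply pow_lt; lra. apply Rinv_0_lt_compat; auto. }
    set (W := lsum y (seq 1 J)).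
    assert (HyW : forall j, (1 <= j <= J)%nat -> y j <= W).
    { intros j Hj. unfold W. apply lsum_ge_term. apply in_seq; lia. intros; left; auto. }
    assert (HW : 0 < W). { assert (H := HyW 1%nat ltac:(lia)). specialize (Hy 1%nat). lra. }
    set (x := fun j => R0 * Mr ^ (j - 1) / (psi j * W)).
    assert (Hx0 : forall j, 0 <= x j).
    { intros j. unfold x, psi. unfold Rdiv. apply Rmult_le_pos. apply Rmult_le_pos; [lra|apply pow_le; lra].
      left; apply Rinv_0_lt_compat, Rmult_lt_0_compat; auto. }
    set (m := fun j => if Rle_dec 1 (x j) then ceil_nat (2 * x j) else 0%nat).
    assert (Hm1 : forall j, 2 * x j - 2 <= INR (m j)).
    { intros j. unfold m. destruct (Rle_dec 1 (x j)).
      - assert (H := ceil_nat_spec (2 * x j) ltac:(specialize (Hx0 j); lra)). lra.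
      - simpl. lra. }
    assert (Hm2 : forall j, INR (m j) * INR (m j) <= 9 * (x j * x j)).
    { intros j. unfold m. destruct (Rle_dec 1 (x j)).
      - assert (H := ceil_nat_spec (2 * x j) ltac:(specialize (Hx0 j); lra)).
        assert (0 <= INR (ceil_nat (2 * x j)) <= 3 * x j) by lra. nra.
      - simpl. specialize (Hx0 j). nra. }
    assert (Hsq : forall j, Mr ^ (2 * (j - 1)) = Mr ^ (j - 1) * Mr ^ (j - 1)).
    { intros j. replace (2 * (j - 1))%nat with ((j-1) + (j-1))%nat by lia. apply pow_add. }
    exists J, m. split.
    + apply Rle_trans with (lsum (fun j => (2 * x j - 2) * Mr ^ (j - 1)) (seq 1 J)).
      * replace (lsum (fun j => (2 * x j - 2) * Mr ^ (j - 1)) (seq 1 J)) with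
          (2 * lsum (fun j => R0 / W * y j) (seq 1 J) + (-2) * lsum (fun j => Mr ^ (j - 1)) (seq 1 J)).
        -- rewrite lsum_scal. fold W. assert (HG := geom_le Mr J ltac:(lra) HJ1).
           replace (R0 / W * W) with R0 by (field; lra). lra.
        -- rewrite <- !lsum_scal, <- lsum_plus. apply lsum_ext. intros j _.
           unfold x, y. rewrite Hsq. field. split; [lra|]. unfold psi; specialize (Hpos j); lra.
      * apply lsum_le. intros j _. apply Rmult_le_compat_r; auto. apply pow_le; lra.
    + apply Rle_trans with (lsum (fun j => 9 * (R0 ^ 2 / (W * W)) * y j) (seq 1 J)).
      * apply lsum_le. intros j _. fold (psi j).
        apply Rle_trans with (9 * (x j * x j) * psi j).
        -- replace (INR (m j) * (psi j * INR (m j))) with ((INR (m j) * INR (m j)) * psi j) by ring.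
           apply Rmult_le_compat_r; [left; apply Hpos|auto].
        -- right. assert (psi j <> 0) by (unfold psi; specialize (Hpos j); lra).
           unfold x, y. rewrite Hsq. field. repeat split; auto; lra.
      * rewrite lsum_scal. fold W.
        assert (HR0J : R0 <= Mr ^ (J + 1)).
        { replace (J + 1)%nat with (S (S (J - 1))) by lia. simpl. simpl in HJ.
          replace J with (S (J - 1)) in HJ by lia. simpl in HJ. nra. }
        assert (H3 := I3 phi Hphi_pos Hphi_incr Mr ltac:(lra) (J + 1) R0 pr ltac:(lra)).
        rewrite Nat.add_1_r, seq_S, lsum_app, lsum_cons, lsum_nil in H3.
        assert (HT : lsum (fun j => Mr ^ (2 * j) / phi (Mr ^ (j - 1))) (seq 1 J) <= Mr ^ 2 * A * W).
        { unfold W. rewrite <- lsum_scal. apply lsum_le. intros j Hj. apply in_seq in Hj.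
          assert (HAj := HA j ltac:(lia)). fold Mr in HAj.
          assert (Hp1' := Hpos (j - 1)%nat). assert (Hpj := Hpos j).
          unfold y, psi. replace (Mr ^ (2 * j)) with (Mr ^ 2 * Mr ^ (2 * (j - 1))).
          2:{ rewrite <- pow_add. f_equal. lia. }
          assert (0 <= Mr ^ 2 * Mr ^ (2 * (j - 1))) by (apply Rmult_le_pos; apply pow_le; lra).
          unfold Rdiv. replace (Mr ^ 2 * A * (Mr ^ (2 * (j - 1)) * / phi (Mr ^ j))) with
            ((Mr ^ 2 * Mr ^ (2 * (j - 1))) * (A * / phi (Mr ^ j))) by ring.
          apply Rmult_le_compat_l; auto.
          apply (Rmult_le_reg_r (phi (Mr ^ j) * phi (Mr ^ (j - 1)))). nra.
          field_simplify; try lra. }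
        assert (HTJ : Mr ^ (2 * (1 + J)) / phi (Mr ^ (1 + J - 1)) <= Mr ^ 4 * W).
        { apply Rle_trans with (Mr ^ 4 * y J).
          - right. unfold y, psi. replace (1 + J - 1)%nat with J by lia.
            replace (2 * (1 + J))%nat with (4 + 2 * (J - 1))%nat by lia. rewrite pow_add.
            field. specialize (Hpos J); lra.
          - apply Rmult_le_compat_l; [apply pow_le; lra|]. apply HyW; lia. }
        assert (HI1W : I1 <= I1 * phi Mr * W).
        { assert (H := HyW 1%nat ltac:(lia)). unfold y, psi in H. simpl in H.
          rewrite Rmult_1_r in H. replace (1 / phi Mr) with (/ phi Mr) in H by (field; lra).
          replace I1 with (I1 * phi Mr * / phi Mr) at 1 by (field; lra).
          apply Rmult_le_compat_l; [nra|auto]. }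
        assert (HIW : I <= (I1 * phi Mr + Mr ^ 2 * A + Mr ^ 4) * W) by lra.
        assert (HK : 9 * I <= K1 * W).
        { unfold K1. assert (0 <= 16 * phi Mr * (I1 + Mr ^ 2 / phi 1) * W) by (apply Rmult_le_pos; lra). nra. }
        replace (9 * (R0 ^ 2 / (W * W)) * W) with (9 * R0 ^ 2 / W) by (field; lra).
        unfold Rdiv. apply (Rmult_le_reg_r (W * I)). nra.
        replace (9 * R0 ^ 2 * / W * (W * I)) with (R0 ^ 2 * (9 * I)) by (field; lra).
        replace (K1 * (R0 ^ 2 * / I) * (W * I)) with (R0 ^ 2 * (K1 * W)) by (field; lra).
        apply Rmult_le_compat_l; lra.
Qed.
End Params.
Lemma choose_k d t : 0 < d -> 0 < t -> exists k : nat, (2 <= k)%nat /\ Rpower (4 / 2 ^ k) d <= t.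
Proof. intros Hd Ht. set (c := Rabs (ln 4 - ln t / d)).
  exists (ceil_nat (2 * c) + 2)%nat. split; [lia|].
  set (k := (ceil_nat (2 * c) + 2)%nat).
  assert (Hc : 0 <= c) by apply Rabs_pos.
  assert (Hk : 2 * c < INR k).
  { unfold k. rewrite plus_INR. assert (H := ceil_nat_spec (2 * c) ltac:(lra)). simpl. lra. }
  assert (Hl2 := ln_lt_2).
  assert (Hk0 : 0 <= INR k) by apply pos_INR.
  assert (H1 : ln 4 - ln t / d < INR k * ln 2).
  { assert (ln 4 - ln t / d <= c) by apply Rle_abs. nra. }
  unfold Rpower. rewrite <- (exp_ln t) by auto.
  left. apply exp_increasing.
  assert (Hp : 0 < 2 ^ k) by (apply pow_lt; lra).
  unfold Rdiv. rewrite ln_mult, ln_Rinv, ln_pow; try lra; try apply Rinv_0_lt_compat; auto.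
  assert (d * (ln 4 - ln t / d) < d * (INR k * ln 2)) by (apply Rmult_lt_compat_l; auto).
  replace (d * (ln 4 - ln t / d)) with (d * ln 4 - ln t) in H by (field; lra).
  nra.
Qed.

Lemma doubling (phi : R -> R) gamma : (forall t, 0 < t -> 0 < phi t) ->
  (forall s t, 0 < s -> s <= t -> phi s <= phi t) -> regularly_varying phi gamma ->
  exists Kd, 1 <= Kd /\ forall t, 1 <= t -> phi (2 * t) <= Kd * phi t.
Proof. intros Hpos Hinc Hrv. destruct (Hrv 2 ltac:(lra) 1 ltac:(lra)) as [T HT].
  set (T' := Rmax T 1).
  assert (HT1 : T <= T') by apply Rmax_l. assert (HT2 : 1 <= T') by apply Rmax_r.
  set (K := Rmax 1 (Rmax (Rpower 2 gamma + 1) (phi (2 * T') / phi 1))).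
  exists K. split; [apply Rmax_l|]. intros t Ht.
  assert (Hp1 : 0 < phi 1) by (apply Hpos; lra). assert (Hpt : 0 < phi t) by (apply Hpos; lra).
  assert (HK1 : Rpower 2 gamma + 1 <= K) by (unfold K; eapply Rle_trans; [apply Rmax_l|apply Rmax_r]).
  assert (HK2 : phi (2 * T') / phi 1 <= K) by (unfold K; eapply Rle_trans; [apply Rmax_r|apply Rmax_r]).
  destruct (Rlt_le_dec T t) as [Hlt|Hle].
  - specialize (HT t Hlt). apply Rabs_def2 in HT. destruct HT as [HT _].
    assert (phi (2 * t) / phi t < K) by lra.
    apply Rlt_le. apply (Rmult_lt_reg_r (/ phi t)). apply Rinv_0_lt_compat; auto.
    rewrite Rmult_assoc, Rinv_r, Rmult_1_r; lra.
  - assert (phi (2 * t) <= phi (2 * T')) by (apply Hinc; lra).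
    assert (phi 1 <= phi t) by (apply Hinc; lra).
    assert (phi (2 * T') <= K * phi 1).
    { apply (Rmult_le_reg_r (/ phi 1)). apply Rinv_0_lt_compat; auto.
      rewrite Rmult_assoc, Rinv_r, Rmult_1_r; lra. }
    assert (1 <= K) by apply Rmax_l. assert (K * phi 1 <= K * phi t) by (apply Rmult_le_compat_l; lra). lra.
Qed.

Lemma doubling_iter (phi : R -> R) Kd : (forall t, 1 <= t -> phi (2 * t) <= Kd * phi t) -> 0 <= Kd ->
  forall k t, 1 <= t -> phi (2 ^ k * t) <= Kd ^ k * phi t.
Proof. intros H HK. induction k; intros t Ht.
  - simpl. rewrite !Rmult_1_l. lra.
  - simpl. rewrite Rmult_assoc. eapply Rle_trans. apply H.
    assert (1 <= 2 ^ k) by (apply pow_R1_Rle; lra). nra.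
    rewrite Rmult_assoc. apply Rmult_le_compat_l; auto. Qed.

Theorem mainTheorem11
  (G : Type) (mul : G -> G -> G) (inv : G -> G) (e : G)
  (Hgrp : is_group mul inv e) (Hcount : countable G)
  (H : G -> Prop) (S : list G)
  (HS_sym : forall s, In s S -> In (inv s) S)
  (HS_gen : forall h, H h <-> exists n, word_le mul e S h n)
  (mu : G -> R)
  (Hmu_nonneg : forall y, 0 <= mu y)
  (Hmu_prob : sums_to mu 1)
  (Hmu_sym : forall y, mu (inv y) = mu y)
  (Hmu_supp : forall y, mu y <> 0 -> H y)
  (d : R) (Hd : 0 < d)
  (phi : R -> R)
  (Hphi_pos : forall t, 0 < t -> 0 < phi t)
  (Hphi_incr : forall s t, 0 < s -> s <= t -> phi s <= phi t)
  (gamma : R) (Hgamma : 0 < gamma) (Hphi_rv : regularly_varying phi gamma)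
  (Hvol : exists c1 c2, 0 < c1 /\ 0 < c2 /\
     forall r, 1 <= r -> forall l : list G, NoDup l ->
       (forall h, In h l <-> exists n, word_length mul e S h n /\ INR n <= r) ->
       c1 * Rpower r d <= INR (length l) <= c2 * Rpower r d)
  (Hmu_est : exists c1 c2, 0 < c1 /\ 0 < c2 /\
     forall h n, H h -> word_length mul e S h n ->
       c1 / (phi (1 + INR n) * Rpower (1 + INR n) d) <= mu h <=
       c2 / (phi (1 + INR n) * Rpower (1 + INR n) d))
  (Phi : R -> R)
  (HPhi : forall t, 1 <= t ->
     exists I, improper_int0 (fun s => s / phi s) t I /\ Phi t = t ^ 2 / I) :
  exists C : R,
    forall f : G -> R, in_L2 f ->
    forall (Rr : R), 1 <= Rr ->
    forall (h : G) (n : nat), H h -> word_length mul e S h n -> INR n <= Rr ->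
    forall Ssum : R,
      sums_to (fun p : G * G => (f (mul (fst p) (snd p)) - f (fst p)) ^ 2 * mu (snd p)) Ssum ->
      forall l : list G, NoDup l ->
        lsum (fun x => (f (mul x h) - f x) ^ 2) l <= C * Phi Rr * (Ssum / 2).
Proof.
  destruct Hvol as [c1 [c2 [Hc1 [Hc2 Hvl]]]].
  destruct Hmu_est as [a1 [a2 [Ha1 [Ha2 Hmu]]]].
  destruct (HPhi 1 (Rle_refl 1)) as [I1 [HI1 _]].
  assert (Hint : forall t, 1 <= t -> exists I, improper_int0 (f0 phi) t I).
  { intros t Ht; destruct (HPhi t Ht) as [I [HI _]]; exists I; exact HI. }
  destruct (doubling phi gamma Hphi_pos Hphi_incr Hphi_rv) as [Kd [HKd Hdb]].
  assert (Hc12 : 0 < c1 / (2 * c2)) by (unfold Rdiv; apply Rmult_lt_0_compat; [lra|apply Rinv_0_lt_compat; lra]).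
  destruct (choose_k d (c1 / (2 * c2)) Hd Hc12) as [k [Hk2 Hkpow]].
  set (Mn := (2 ^ k)%nat).
  assert (HMr : INR Mn = 2 ^ k) by (unfold Mn; rewrite pow_INR; simpl; f_equal; lra).
  assert (HMn : (4 <= Mn)%nat).
  { unfold Mn. replace 4%nat with (2 ^ 2)%nat by reflexivity. apply Nat.pow_le_mono_r; lia. }
  assert (HMr4 : 4 <= INR Mn) by (replace 4 with (INR 4) by (simpl; lra); apply le_INR; auto).
  assert (HA : forall j, (1 <= j)%nat -> phi (INR Mn ^ j) <= Kd ^ k * phi (INR Mn ^ (j - 1))).
  { intros j Hj. destruct j as [|j']; [lia|]. rewrite Nat.sub_succ, Nat.sub_0_r.
    simpl. rewrite HMr. apply doubling_iter; [auto|lra|]. rewrite <- HMr. apply pow_R1_Rle. lra. }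
  destruct (params phi Hphi_pos Hphi_incr Hint Mn HMn (Kd ^ k) HA I1 HI1) as [K1 [HK1 Hpar]].
  destruct (shell_funs G mul e S Mn) as [Zf [Uf [HZf HUf]]].
  set (cz := c1 * Rpower (1/2) d / 2).
  assert (Hcz : 0 < cz) by (unfold cz; assert (0 < Rpower (1/2) d) by apply Rpower_pos; nra).
  assert (Hk' : Rpower (4 / INR Mn) d <= c1 / (2 * c2)) by (rewrite HMr; auto).
  assert (Hlen : forall j, (1 <= j)%nat -> cz * Rpower (INR Mn ^ j) d <= INR (length (Zf j))).
  { intros j Hj. destruct (HZf j) as [HZn HZi].
    apply (vol_shell G mul e S d c1 c2 Hd Hc1 Hc2 Hvl Mn HMn Hk' j Hj); auto. }
  assert (Hp2 : 0 < Rpower 2 d) by apply Rpower_pos.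
  set (K0 := 4 * Kd * Rpower 2 d / (cz * a1)).
  assert (HK0 : 0 <= K0).
  { unfold K0, Rdiv. apply Rmult_le_pos. nra. left; apply Rinv_0_lt_compat; nra. }
  exists (2 * K0 * K1).
  intros f Hf Rr HRr h n Hh Hhn Hn Ssum HSs l Hl.
  destruct (HPhi Rr HRr) as [I [HI HPhiR]]. rewrite HPhiR.
  destruct (Hpar Rr I HRr HI) as [J [m [Hcov Hcost]]].
  assert (HSpos : 0 <= Ssum).
  { destruct HSs as [Hub _]. apply Hub. exists []. split; [constructor|reflexivity]. }
  assert (Hcovn : (n <= fold_right (fun j acc => (m j * Mn ^ (j-1) + acc)%nat) 0%nat (seq 1 J))%nat).
  { apply INR_le. rewrite INR_fold. lra. }
  assert (HM2 : (2 <= Mn)%nat) by (eapply Nat.le_trans; [|exact HMn]; repeat constructor).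
  assert (HZ : forall j, (1 <= j)%nat -> NoDup (Zf j) /\ Zf j <> [] /\
    forall z, In z (Zf j) -> exists nz, wlen G mul e S z nz /\ (2 * Mn ^ (j - 1) < nz <= Mn ^ j - Mn ^ (j - 1))%nat).
  { intros j Hj. destruct (HZf j) as [HZn HZi]. split; [auto|split].
    - intros E. specialize (Hlen j Hj). rewrite E in Hlen. simpl in Hlen.
      assert (0 < cz * Rpower (INR Mn ^ j) d) by (apply Rmult_lt_0_compat; [auto|apply Rpower_pos]). lra.
    - intros z Hz. apply HZi; auto. }
  assert (HU : forall j, (1 <= j)%nat -> NoDup (Uf j) /\
    forall w, In w (Uf j) <-> exists n, wlen G mul e S w n /\ (Mn ^ (j - 1) < n <= Mn ^ j)%nat).
  { intros j _. apply HUf. }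
  assert (Hpsi : forall j, (1 <= j <= J)%nat -> 0 < phi (INR Mn ^ j)).
  { intros j _. apply Hphi_pos. apply pow_lt. lra. }
  assert (Hmu_lb : forall j w, (1 <= j <= J)%nat -> In w (Uf j) ->
     4 / (phi (INR Mn ^ j) * INR (length (Zf j))) <= K0 * mu w).
  { intros j w Hj Hw. destruct (HUf j) as [_ Hi]. apply Hi in Hw. destruct Hw as [nw [Hnw Hb]].
    assert (HHw : H w) by (apply HS_gen; exists nw; exact (wlen_wle G mul e S w nw Hnw)).
    destruct (Hmu w nw HHw Hnw) as [Hlow _].
    set (X := INR Mn ^ j).
    assert (HX1 : 1 <= X) by (unfold X; apply pow_R1_Rle; lra).
    assert (Hnw2 : INR nw <= X).
    { unfold X. rewrite <- pow_INR. apply le_INR. destruct Hb; auto. }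
    assert (HnwP : 0 <= INR nw) by apply pos_INR.
    assert (HpX : 0 < phi X) by (apply Hphi_pos; lra).
    assert (HpN : 0 < phi (1 + INR nw)) by (apply Hphi_pos; lra).
    assert (Hph : phi (1 + INR nw) <= Kd * phi X).
    { eapply Rle_trans; [apply Hphi_incr; [lra|]|apply Hdb; lra]. lra. }
    assert (HRp : Rpower (1 + INR nw) d <= Rpower 2 d * Rpower X d).
    { rewrite <- Rpower_mul by lra. apply Rle_Rpower_l; lra. }
    assert (HRpN : 0 < Rpower (1 + INR nw) d) by apply Rpower_pos.
    assert (HRpX : 0 < Rpower X d) by apply Rpower_pos.
    assert (HL := Hlen j ltac:(destruct Hj; auto)). fold X in HL.
    apply Rle_trans with (4 / (phi X * (cz * Rpower X d))).
    { unfold Rdiv. apply Rmult_le_compat_l; [lra|]. apply Rinv_le_contravar.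
      apply Rmult_lt_0_compat; [|apply Rmult_lt_0_compat]; auto. apply Rmult_le_compat_l; lra. }
    apply Rle_trans with (K0 * (a1 / (phi (1 + INR nw) * Rpower (1 + INR nw) d))); [|apply Rmult_le_compat_l; auto].
    replace (4 / (phi X * (cz * Rpower X d))) with (K0 * (a1 / ((Kd * phi X) * (Rpower 2 d * Rpower X d)))).
    2:{ unfold K0. field. repeat split; try lra. }
    apply Rmult_le_compat_l; auto. unfold Rdiv. apply Rmult_le_compat_l; [lra|].
    apply Rinv_le_contravar. apply Rmult_lt_0_compat; auto.
    apply Rmult_le_compat; lra. }
  eapply Rle_trans.
  { apply (assemble G mul inv e Hgrp S HS_sym Mn HM2 Zf Uf HZ HU f mu Hmu_nonneg h n Hhn m
      (fun j => phi (INR Mn ^ j)) J K0 HK0 Hpsi Hcovn Hmu_lb Ssum HSs l Hl). }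
  assert (Hq : K0 * Ssum * lsum (fun j => INR (m j) * (phi (INR Mn ^ j) * INR (m j))) (seq 1 J) <=
      K0 * Ssum * (K1 * (Rr ^ 2 / I))) by (apply Rmult_le_compat_l; [nra|auto]).
  replace (2 * K0 * K1 * (Rr ^ 2 / I) * (Ssum / 2)) with (K0 * Ssum * (K1 * (Rr ^ 2 / I))) by (set (q := Rr ^ 2 / I); field).
  lra.
Qed.
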